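(* Let $v$ be a node that is seed-infected at time step $t$ during the execution of the Follow algorithm (described in the context), and let $e$ be an edge adjacent to $v$ with $\lambda(e)\in\{t+1,\dots,t+\delta\}$. Then during the execution there is a round with a successful infection via $e$ (from $v$ or to $v$).
   Context: A temporal graph $\mathcal G=(V,E,\lambda)$ with lifetime $T_{\max}$ consists of a finite undirected static graph $(V,E)$ and a labeling $\lambda:E\to\{1,\dots,T_{\max}\}$; edge $e$ is present only at time $\lambda(e)$. Infection model with parameter $\delta\in\mathbb N^+$: a seed $(u,t)$ makes $u$ infected at time $t$; otherwise a susceptible node $u$ becomes infected at time $t$ iff some neighbour $v$ infectious at time $t$ has $\lambda(uv)=t$ (exactly one infector recorded if several exist). A node infected at time $t$ is infectious at times $t+1,\dots,t+\delta$ and resistant afterwards. Each round, the Discoverer submits seed infections and observes an infection log (triples $(u,v,t)$: $u$ infected $v$ at time $t$). Subroutine Explore$(u,t)$: for each $t'\in\{t-\delta-1,t-1,t\}$, if no round with seed $(u,t')$ was performed, perform a round with the single seed $(u,t')$ and record it; then for each newly observed successful infection along an edge $uv$ at time $t''$, call Explore$(v,t'')$. Algorithm Follow: pick any node $v_0$; for each $i\in[0,\lceil T_{\max}/\delta\rceil]$ perform a round with single seed $(v_0,i\delta)$; for each edge $e=v_0u$ along which an infection succeeds, call Explore$(u,\lambda(e))$. *)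

(* Defs.v *)
From mathcomp Require Import all_boot all_order all_algebra.
Set Implicit Arguments. Unset Strict Implicit. Unset Printing Implicit Defensive.
Import Order.TTheory GRing.Theory Num.Theory.
Local Open Scope ring_scope.

(* A temporal graph: finite undirected simple static graph (adj) with a
   labeling lab of its edges by times in {1..Tmax}.  lab u v is only
   meaningful when adj u v; edge e = {u,v} is present only at time lab u v. *)
Record tgraph (V : finType) := TGraph {
  adj : rel V;
  lab : V -> V -> nat;
  Tmax : nat;
  adj_sym : symmetric adj;
  adj_irr : irreflexive adj;
  lab_sym : forall u v, lab u v = lab v u;
  lab_range : forall u v, adj u v -> (1 <= lab u v <= Tmax)%N
}.

Section Infection.
Variables (V : finType) (G : tgraph V) (delta : nat).

Definition infectious (it : V -> option int) (u : V) (t : int) : Prop :=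
  exists tu, it u = Some tu /\ tu < t /\ t <= tu + delta%:Z.

Definition can_infect (it : V -> option int) (v : V) (t : int) : Prop :=
  exists u, adj G u v /\ (lab G u v)%:Z = t /\ infectious it u t.

(* A valid round with the single seed (s, t0): [it] gives the infection time
   of each node (None = never infected), [log a b t] is the infection log
   ("a infected b at time t"). *)
Definition valid_round (s : V) (t0 : int) (it : V -> option int)
    (log : V -> V -> int -> Prop) : Prop :=
  [/\ it s = Some t0,
      (forall v t, v != s ->
         (it v = Some t <-> (can_infect it v t /\
                             forall t', t' < t -> ~ can_infect it v t'))),
      (forall a b t, log a b t ->
         [/\ b != s, it b = Some t, adj G a b, (lab G a b)%:Z = t
           & infectious it a t]) &
      (forall b t, b != s -> it b = Some t ->
         exists a, log a b t /\ forall a', log a' b t -> a' = a)].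

Definition valid_logs (log_of : V -> int -> V -> V -> int -> Prop) : Prop :=
  forall s t0, exists it, valid_round s t0 it (log_of s t0).

(* ceil(Tmax / delta) for delta >= 1 *)
Definition nrounds : nat := ((Tmax G + delta.-1) %/ delta)%N.

(* The set of seeds (u, t') of the rounds performed by Follow started at v0,
   when the round with seed (s,t0) produces the log [log_of s t0].
   - Follow performs rounds (v0, i*delta), i = 0..ceil(Tmax/delta);
   - every performed round with seed u (whether performed by Follow or by
     a call Explore(u,.)) triggers, for each successful infection along an
     edge uw at time t'' in its log, a call Explore(w, t''), which performs
     (if not yet performed) the rounds with seeds (w,t''-delta-1), (w,t''-1),
     (w,t'').  Rounds are never repeated, so the set of performed rounds is
     the least set closed under these rules. *)
Inductive performed (log_of : V -> int -> V -> V -> int -> Prop) (v0 : V)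
  : V -> int -> Prop :=
| perf_follow (i : nat) :
    (i <= nrounds)%N -> performed log_of v0 v0 (i * delta)%:Z
| perf_explore (u : V) (s : int) (w : V) (t'' t' : int) :
    performed log_of v0 u s -> log_of u s u w t'' ->
    t' \in [:: t'' - delta%:Z - 1; t'' - 1; t''] ->
    performed log_of v0 w t'.

End Infection.

(* Main.v *)
Require Import Defs.
From mathcomp Require Import all_boot all_order all_algebra.
From mathcomp Require Import zify.
From Stdlib Require Import Classical.
Import Order.TTheory GRing.Theory Num.Theory.
Local Open Scope ring_scope.
Set Implicit Arguments. Unset Strict Implicit.

Section S.
Variables (V : finType) (G : tgraph V) (delta : nat).

Lemma can_infect_ge1 it b T : can_infect G delta it b T -> 1 <= T.
Proof.
case=> u [hadj [<- _]]. have /andP[h _] := lab_range hadj. lia.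
Qed.

Lemma chain s t0 it log : valid_round G delta s t0 it log ->
  forall b tb, b != s -> it b = Some tb ->
  exists x l, log s x l /\ t0 < l <= tb.
Proof.
move=> hv; case: (hv) => hs hit hlog hex.
suff H: forall n b tb, (`|tb|%N <= n)%N -> b != s -> it b = Some tb ->
    exists x l, log s x l /\ t0 < l <= tb.
  by move=> b tb; apply: H (leqnn _).
elim=> [|n IH] b tb hn hb htb.
  have [hc _] := (hit b tb hb).1 htb. have := can_infect_ge1 hc. lia.
have [hc _] := (hit b tb hb).1 htb. have := can_infect_ge1 hc => hge.
have [a [hl _]] := hex b tb hb htb.
have [_ _ _ _ [ta [hta [lt le]]]] := hlog _ _ _ hl.
case: (eqVneq a s) => [eas|nas].
  subst a. exists b, tb. split=>//. rewrite hs in hta; case: hta => e. lia.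
have [hca _] := (hit a ta nas).1 hta. have := can_infect_ge1 hca => hgea.
have [|x [l [h1 h2]]] := IH a ta _ nas hta. lia.
exists x, l; split=>//; lia.
Qed.

Lemma first_time s t0 it log : valid_round G delta s t0 it log ->
  forall b T, b != s -> can_infect G delta it b T ->
  exists tb, it b = Some tb /\ tb <= T.
Proof.
move=> hv; case: (hv) => hs hit hlog hex.
suff H: forall n b T, (`|T|%N <= n)%N -> b != s -> can_infect G delta it b T ->
  exists tb, it b = Some tb /\ tb <= T.
  by move=> b T; apply: H (leqnn _).
elim=> [|n IH] b T hn hb hc.
  have := can_infect_ge1 hc. lia.
have := can_infect_ge1 hc => hge.
case: (classic (exists t', t' < T /\ can_infect G delta it b t')).
  case=> t' [lt hc']. have := can_infect_ge1 hc' => hge'.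
  have [|tb [h1 h2]] := IH b t' _ hb hc'. lia.
  exists tb; split=>//; lia.
move=> hn'. exists T; split; last by [].
apply/(hit b T hb). split=>// t' lt hc'. apply: hn'. by exists t'.
Qed.

Lemma step x l it log : (0 < delta)%N -> valid_round G delta x (l - 1) it log ->
  forall v, adj G x v -> (lab G x v)%:Z = l -> log x v l.
Proof.
move=> dpos hv; case: (hv) => hs hit hlog hex v hadj hlab.
have nvx : v != x.
  apply/eqP => e; subst v. by rewrite (adj_irr G) in hadj.
have Hv : it v = Some l.
  apply/(hit v l nvx); split.
    exists x; split=>//; split=>//. exists (l - 1); split=>//; lia.
  move=> t' lt [u [hadj' [hlab' [tu [htu [h1 h2]]]]]].
  case: (eqVneq u x) => [eux|nux].
    subst u; rewrite hs in htu; case: htu => e; lia.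
  have [y [l' [_ hh]]] := chain hv nux htu. lia.
have [a [ha _]] := hex v l nvx Hv.
have [_ _ _ _ [ta [hta [lt _]]]] := hlog _ _ _ ha.
case: (eqVneq a x) => [eax|nax]; first by rewrite -eax.
have [y [l' [_ hh]]] := chain hv nax hta. lia.
Qed.

End S.

Theorem mainTheorem8 (V : finType) (G : tgraph V) (delta : nat)
    (log_of : V -> int -> V -> V -> int -> Prop) (v0 : V)
    (v w : V) (t : int) :
  (0 < delta)%N ->
  valid_logs G delta log_of ->
  performed G delta log_of v0 v t ->
  adj G v w ->
  t < (lab G v w)%:Z <= t + delta%:Z ->
  exists (x : V) (s : int) (a b : V) (tau : int),
    performed G delta log_of v0 x s /\ log_of x s a b tau /\
    ((a = v /\ b = w) \/ (a = w /\ b = v)).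
Proof.
move=> dpos hvl hperf hadj hL.
suff H: forall n t, (`|(lab G v w)%:Z - t|%N <= n)%N ->
    performed G delta log_of v0 v t -> t < (lab G v w)%:Z <= t + delta%:Z ->
  exists (x : V) (s : int) (a b : V) (tau : int),
    performed G delta log_of v0 x s /\ log_of x s a b tau /\
    ((a = v /\ b = w) \/ (a = w /\ b = v)).
  by apply: H (leqnn _) hperf hL.
elim=> [|n IH] t' hn hp hr; first lia.
have [it hv] := hvl v t'.
case: (hv) => hs hit hlog hex.
have nwv : w != v.
  apply/eqP => e; subst w. by rewrite (adj_irr G) in hadj.
have hc : can_infect G delta it w (lab G v w)%:Z.
  exists v; split; first by [].
  split; first by [].
  exists t'; split=>//; lia.
have [tw [htw le]] := first_time hv nwv hc.
have [a [ha _]] := hex w tw nwv htw.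
case: (eqVneq a v) => [eav|nav].
  subst a. exists v, t', v, w, tw. by split=>//; split=>//; left.
have [_ _ _ _ [ta [hta [lt _]]]] := hlog _ _ _ ha.
have [x1 [l1 [hl1 hlt]]] := chain hv nav hta.
have [_ _ hadj1 hlab1 _] := hlog _ _ _ hl1.
have hp1 : performed G delta log_of v0 x1 (l1 - 1).
  apply: perf_explore hp hl1 _. by rewrite !in_cons eqxx !orbT.
have [it1 hv1] := hvl x1 (l1 - 1).
have hlog1 : log_of x1 (l1 - 1) x1 v l1.
  apply: (step dpos hv1); first by rewrite (adj_sym G).
  by rewrite (lab_sym G).
have hp2 : performed G delta log_of v0 v l1.
  apply: perf_explore hp1 hlog1 _. by rewrite !in_cons eqxx !orbT.
apply: (IH l1) => //; clear -hn hr hlt lt le dpos;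
  move: (lab G v w) hn hr le => L hn hr le; lia.
Qed.
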